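(* Let $A$ be a real $m\times n$ matrix, $\mathbf b\in\mathbb R^m$, $\mathbf c\in\mathbb R^n$ (row vector), such that the linear program $\max\mathbf c\mathbf x$ s.t. $A\mathbf x\le\mathbf b$, $\mathbf x\ge0$ has unique optimal primal and dual solutions $\mathbf x^*$ and $\mathbf y^*$. Let $\lambda=\min(\alpha_P,\alpha_D,\beta_P,\beta_D)$. Then \[ \delta(A,\mathbf b,\mathbf c)\ \ge\ \frac{\lambda^2\,\gamma}{2\max(1,\sqrt n\|A\|)\,(1+\|A\|)}. \]
   Context: The dual is $\min\mathbf y\mathbf b$ s.t. $\mathbf yA\ge\mathbf c$, $\mathbf y\ge0$. $U=\{i:x^*_i>0\}$, $V=\{j:y^*_j>0\}$, $\bar U,\bar V$ their complements. Define $\alpha_P=\min_{i\in U}x^*_i$, $\alpha_D=\min_{j\in V}y^*_j$, $\beta_P=\min_{j\in\bar V}(b_j-A_{j,:}\mathbf x^* )$, $\beta_D=\min_{i\in\bar U}(\mathbf y^*A_{:,i}-c_i)$, and $\gamma=\min_{k\in U}\mathrm{dist}(A_{V,k},\mathrm{span}(A_{V,U\setminus\{k\}}))$, where $A_{V,k}$ is column $k$ restricted to rows in $V$ and $\mathrm{span}(A_{V,U\setminus\{k\}})$ is the span of the columns indexed by $U\setminus\{k\}$ restricted to rows $V$. $\|A\|$ is the spectral norm. For a primal feasible $\mathbf x$, $U(\mathbf x)$ and $V(\mathbf x)$ are the index sets such that $\{x_i:i\notin U(\mathbf x)\}\cup\{b_j-A_{j,:}\mathbf x:j\in V(\mathbf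 x)\}$ are the $n$ smallest values among $\{x_i\}\cup\{b_j-A_{j,:}\mathbf x\}$. $\delta(A,\mathbf b,\mathbf c)$ is the supremum of those $\delta$ such that for every primal feasible $\mathbf x$, $\mathbf c\mathbf x^*-\mathbf c\mathbf x<\delta$ implies $U(\mathbf x)=U$ and $V(\mathbf x)=V$. *)

(* Defs.v *)
From HB Require Import structures.
From mathcomp Require Import all_boot all_order all_algebra.
From mathcomp Require Import boolp classical_sets reals constructive_ereal ereal.
Set Implicit Arguments. Unset Strict Implicit. Unset Printing Implicit Defensive.
Import Order.TTheory GRing.Theory Num.Theory.
Local Open Scope ring_scope.
Local Open Scope classical_set_scope.

Section LP.
Variables (R : realType) (m n : nat).
Variables (A : 'M[R]_(m, n)) (b : 'cV[R]_m) (c : 'rV[R]_n).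

Definition cx (x : 'cV[R]_n) : R := \sum_i c 0 i * x i 0.
Definition yb (y : 'rV[R]_m) : R := \sum_j y 0 j * b j 0.

Definition primal_feasible (x : 'cV[R]_n) : Prop :=
  (forall j, \sum_i A j i * x i 0 <= b j 0) /\ (forall i, 0 <= x i 0).
Definition primal_optimal (x : 'cV[R]_n) : Prop :=
  primal_feasible x /\ forall x', primal_feasible x' -> cx x' <= cx x.

Definition dual_feasible (y : 'rV[R]_m) : Prop :=
  (forall i, c 0 i <= \sum_j y 0 j * A j i) /\ (forall j, 0 <= y 0 j).
Definition dual_optimal (y : 'rV[R]_m) : Prop :=
  dual_feasible y /\ forall y', dual_feasible y' -> yb y <= yb y'.

Definition slack (x : 'cV[R]_n) (j : 'I_m) : R := b j 0 - \sum_i A j i * x i 0.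
Definition dslack (y : 'rV[R]_m) (i : 'I_n) : R := \sum_j y 0 j * A j i - c 0 i.

Definition Uset (xs : 'cV[R]_n) : {set 'I_n} := [set i | 0 < xs i 0].
Definition Vset (ys : 'rV[R]_m) : {set 'I_m} := [set j | 0 < ys 0 j].

(* minimum of a finite list of reals (0 for the empty list) *)
Definition minR (s : seq R) : R :=
  if s is x :: s' then foldr Num.min x s' else 0.

(* lambda = min(alpha_P, alpha_D, beta_P, beta_D), where a minimum over an
   empty index set is +oo (i.e. contributes nothing) *)
Definition lambdaLP (xs : 'cV[R]_n) (ys : 'rV[R]_m) : R :=
  minR ([seq xs i 0 | i in Uset xs] ++ [seq ys 0 j | j in Vset ys] ++
        [seq slack xs j | j in ~: Vset ys] ++ [seq dslack ys i | i in ~: Uset xs]).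

Definition distVk (U : {set 'I_n}) (V : {set 'I_m}) (k : 'I_n) : R :=
  inf (range (fun t : 'I_n -> R =>
     Num.sqrt (\sum_(j in V)
        (A j k - \sum_(i in U :\ k) t i * A j i) ^+ 2))).

Definition gammaLP (xs : 'cV[R]_n) (ys : 'rV[R]_m) : R :=
  minR [seq distVk (Uset xs) (Vset ys) k | k in Uset xs].

Definition norm2 (p : nat) (x : 'cV[R]_p) : R := Num.sqrt (\sum_i x i 0 ^+ 2).
Definition specnorm : R :=
  sup [set norm2 (A *m x) | x in [set x : 'cV[R]_n | norm2 x = 1]].

(* U(x) = U and V(x) = V: the n values {x_i : i notin U} u {b_j - A_j x : j in V}
   are the n smallest among {x_i} u {b_j - A_j x} (strictly, so that U(x),V(x)
   are well defined). *)
Definition lp_value (x : 'cV[R]_n) (s : 'I_n + 'I_m) : R :=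
  match s with inl i => x i 0 | inr j => slack x j end.
Definition selected (U : {set 'I_n}) (V : {set 'I_m}) (s : 'I_n + 'I_m) : bool :=
  match s with inl i => i \notin U | inr j => j \in V end.
Definition UV_of_is (x : 'cV[R]_n) (U : {set 'I_n}) (V : {set 'I_m}) : Prop :=
  (#|~: U| + #|V| = n)%N /\
  forall s t, selected U V s -> ~~ selected U V t -> lp_value x s < lp_value x t.

Definition delta_set (xs : 'cV[R]_n) (ys : 'rV[R]_m) : set R :=
  [set d : R | forall x, primal_feasible x -> cx xs - cx x < d ->
               UV_of_is x (Uset xs) (Vset ys)].
Definition deltaLP (xs : 'cV[R]_n) (ys : 'rV[R]_m) : \bar R :=
  ereal_sup [set d%:E | d in delta_set xs ys].

End LP.

(* Main.v *)
Require Import Defs.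
From HB Require Import structures.
From mathcomp Require Import all_boot all_order all_algebra.
From mathcomp Require Import boolp classical_sets reals constructive_ereal ereal.
From mathcomp Require Import lra ring.
Set Implicit Arguments. Unset Strict Implicit. Unset Printing Implicit Defensive.
Import Order.TTheory GRing.Theory Num.Theory.
Local Open Scope ring_scope.

Section Farkas.
Variable R : realFieldType.

Lemma exists_max (I : finType) (P : pred I) (f : I -> R) i0 : P i0 ->
  exists2 i, P i & forall j, P j -> f j <= f i.
Proof.
move=> Pi0; case: (@arg_maxP _ R I i0 P f Pi0) => i Pi H; exists i => // j Pj.
Qed.

Lemma exists_min (I : finType) (P : pred I) (f : I -> R) i0 : P i0 ->
  exists2 i, P i & forall j, P j -> f i <= f j.
Proof.
move=> Pi0; case: (@arg_minP _ R I i0 P f Pi0) => i Pi H; exists i => // j Pj.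
Qed.

Section Lift.
Variables (I : finType) (a : I -> R).
Definition posp (p q : I) := (0 < a p) && (a q < 0).
Definition liftg (g : I -> R) (r' : (I + (I * I))%type) : R :=
  match r' with
  | inl r => if a r == 0 then g r else 0
  | inr pq => if posp pq.1 pq.2 then - a pq.2 * g pq.1 + a pq.1 * g pq.2 else 0
  end.
Variable y' : (I + (I * I))%type -> R.
Definition liftedy (r : I) : R :=
  (if a r == 0 then y' (inl r) else 0) +
  \sum_q (if posp r q then y' (inr (r, q)) * - a q else 0) +
  \sum_p (if posp p r then y' (inr (p, r)) * a p else 0).

Lemma liftedy_ge0 : (forall r', 0 <= y' r') -> forall r, 0 <= liftedy r.
Proof.
move=> H r; rewrite /liftedy; apply: addr_ge0; first apply: addr_ge0.
- by case: ifP.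
- apply: sumr_ge0 => q _; case: ifP => // /andP [h1 h2].
  by apply: mulr_ge0 => //; rewrite oppr_ge0 ltW.
- apply: sumr_ge0 => p _; case: ifP => // /andP [h1 h2].
  by apply: mulr_ge0 => //; rewrite ltW.
Qed.

Lemma liftedy_sum g :
  \sum_r liftedy r * g r = \sum_r' y' r' * liftg g r'.
Proof.
rewrite big_sumType /=.
rewrite [X in _ = _ + X](eq_bigr (fun i => y' (inr (i.1,i.2)) *
   (if posp i.1 i.2 then - a i.2 * g i.1 + a i.1 * g i.2 else 0))); last by case.
rewrite -(pair_bigA _ (fun p q => y' (inr (p,q)) *
   (if posp p q then - a q * g p + a p * g q else 0))) /=.
rewrite /liftedy.
under eq_bigr => r _ do rewrite !mulrDl.
rewrite !big_split /= -addrA; congr (_ + _).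
  by apply: eq_bigr => r _; case: ifP => _; rewrite ?mul0r ?mulr0.
have -> : \sum_i \sum_j y' (inr (i, j)) *
   (if posp i j then - a j * g i + a i * g j else 0) =
  \sum_i \sum_j (if posp i j then y' (inr (i, j)) * - a j * g i else 0) +
  \sum_i \sum_j (if posp i j then y' (inr (i, j)) * a i * g j else 0).
  rewrite -big_split; apply: eq_bigr => i _; rewrite -big_split; apply: eq_bigr => j _ /=.
  by case: ifP => _; rewrite ?mulr0 ?addr0 // mulrDr !mulrA.
congr (_ + _).
  apply: eq_bigr => p _; rewrite mulr_suml; apply: eq_bigr => q _ /=.
  by case: ifP => _; rewrite ?mul0r.
rewrite exchange_big; apply: eq_bigr => q _; rewrite mulr_suml; apply: eq_bigr => p _ /=.
by case: ifP => _; rewrite ?mul0r.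
Qed.


End Lift.

Lemma pair_ineq (ap aq ep eq vp vq : R) : 0 < ap -> aq < 0 ->
  - aq * ep + ap * eq <= - aq * vp + ap * vq ->
  (vq - eq) / aq <= (vp - ep) / ap.
Proof.
move=> hp hq h.
rewrite ler_ndivrMr // mulrAC ler_pdivrMr //.
nra.
Qed.

Lemma farkas n : forall (I : finType) (M : I -> nat -> R) (v : I -> R),
  (forall x : nat -> R, exists r, v r < \sum_(k < n) M r k * x k) ->
  exists y : I -> R, (forall r, 0 <= y r) /\
    (forall k, (k < n)%N -> \sum_r y r * M r k = 0) /\ \sum_r y r * v r < 0.
Proof.
elim: n => [|n IH] I M v H.
  case: (H (fun _ => 0)) => r; rewrite big_ord0 => vr.
  exists (fun s => if s == r then 1 else 0); split; last split => //.
    by move=> s; case: eqP.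
  rewrite (bigD1 r) //= eqxx mul1r big1 ?addr0 // => s /negbTE ->.
  by rewrite mul0r.
pose a r := M r n.
pose M' (r' : (I + (I * I))%type) k := liftg a (fun r => M r k) r'.
pose v' := liftg a v.
have H' : forall x : nat -> R, exists r', v' r' < \sum_(k < n) M' r' k * x k.
  move=> x'; case: (pselect (exists r', v' r' < \sum_(k < n) M' r' k * x' k)) => // Hn.
  exfalso.
  have Hall : forall r', \sum_(k < n) M' r' k * x' k <= v' r'.
    by move=> r'; rewrite leNgt; apply/negP => hlt; apply: Hn; exists r'.
  pose e r := \sum_(k < n) M r k * x' k.
  pose L r := (v r - e r) / a r.
  have Hz : forall r, a r = 0 -> e r <= v r.
    move=> r ar; have := Hall (inl r); rewrite /M' /v' /= ar eqxx.
    by [].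
  have Hpq : forall p q, 0 < a p -> a q < 0 -> L q <= L p.
    move=> p q hp hq; apply: pair_ineq => //.
    have := Hall (inr (p, q)); rewrite /M' /v' /= /posp hp hq /=.
    rewrite /e !mulr_sumr -big_split /=.
    by under eq_bigr => k _ do rewrite mulrDl -!mulrA.
  have [t Ht] : exists t, forall r, (0 < a r -> t <= L r) /\ (a r < 0 -> L r <= t).
    case: (pselect (exists q, a q < 0)) => [[q0 hq0]|Hneg].
      case: (@exists_max _ (fun q => a q < 0) L _ hq0) => q1 hq1 Hmax; exists (L q1) => r; split.
        by move=> hr; apply: Hpq.
      by move=> hr; apply: Hmax.
    have Hneg' : forall r, ~ a r < 0 by move=> r hr; apply: Hneg; exists r.
    case: (pselect (exists p, 0 < a p)) => [[p0 hp0]|Hpos].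
      case: (@exists_min _ (fun p => 0 < a p) L _ hp0) => p1 hp1 Hmin; exists (L p1) => r; split.
        by move=> hr; apply: Hmin.
      by move=> /Hneg'.
    exists 0 => r; split; last by move=> /Hneg'.
    by move=> hr; exfalso; apply: Hpos; exists r.
  case: (H (fun k => if (k < n)%N then x' k else t)) => r.
  rewrite big_ord_recr /= ltnn.
  rewrite (eq_bigr (fun k : 'I_n => M r k * x' k)); last first.
    by move=> k _; rewrite /= ltn_ord.
  rewrite -/(e r) -/(a r).
  case: (ltgtP (a r) 0) => har.
  - have := (Ht r).2 har; rewrite /L ler_ndivrMr // mulrC => h1 h2; lra.
  - have := (Ht r).1 har; rewrite /L ler_pdivlMr // mulrC => h1 h2; lra.
  - move=> h2; have h3 := Hz r har; have h4 : a r * t = 0 by rewrite har mul0r.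
    lra.
case: (IH _ M' v' H') => y' [y'ge0 [y'M y'v]].
exists (liftedy a y'); split; first exact: liftedy_ge0.
split.
  move=> k; rewrite ltnS leq_eqVlt => /orP [/eqP -> | hk].
    rewrite (liftedy_sum a y' (fun r => M r n)); apply: big1 => r' _.
    case: r' => [r|[p q]] /=; first by case: ifP => [/eqP h|_]; [rewrite /a in h; rewrite h mulr0|rewrite mulr0].
    by case: ifP => _; rewrite ?mulr0 // /a mulNr [M q n * _]mulrC addNr mulr0.
  by have /= -> := liftedy_sum a y' (fun r => M r k); apply: y'M.
by rewrite (liftedy_sum a y' v).
Qed.

End Farkas.

Section Duality.
Variables (R : realType) (m n : nat).
Variables (A : 'M[R]_(m, n)) (b : 'cV[R]_m) (c : 'rV[R]_n).

Lemma farkas_ord (I : finType) (Mi : I -> 'I_n -> R) (v : I -> R) :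
  (forall x : 'I_n -> R, exists r, v r < \sum_i Mi r i * x i) ->
  exists y : I -> R, (forall r, 0 <= y r) /\
    (forall i, \sum_r y r * Mi r i = 0) /\ \sum_r y r * v r < 0.
Proof.
move=> H.
pose M r k := oapp (Mi r) 0 (insub k).
have EM : forall r (i : 'I_n), M r i = Mi r i by move=> r i; rewrite /M valK.
case: (@farkas R n I M v).
  move=> x; case: (H (fun i => x i)) => r hr; exists r.
  by under eq_bigr do rewrite EM.
move=> y [y0 [yM yv]]; exists y; split => //; split => // i.
by rewrite -[RHS](yM i (ltn_ord i)); apply: eq_bigr => r _; rewrite EM.
Qed.

Lemma gap_identity (x : 'cV[R]_n) (y : 'rV[R]_m) :
  yb b y - cx c x = \sum_j y 0 j * slack A b x j + \sum_i dslack A c y i * x i 0.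
Proof.
rewrite /slack /dslack /yb /cx.
under [X in _ = X + _]eq_bigr do rewrite mulrBr.
under [X in _ = _ + X]eq_bigr do rewrite mulrBl.
rewrite !sumrB.
have -> : \sum_i y 0 i * (\sum_i0 A i i0 * x i0 0) =
          \sum_i (\sum_j y 0 j * A j i) * x i 0.
  under eq_bigr do rewrite mulr_sumr.
  rewrite exchange_big; apply: eq_bigr => i _; rewrite mulr_suml.
  by apply: eq_bigr => j _; rewrite mulrA.
by rewrite addrA subrK.
Qed.

Lemma gap_ge0 (x : 'cV[R]_n) (y : 'rV[R]_m) : primal_feasible A b x -> dual_feasible A c y ->
  (forall j, 0 <= y 0 j * slack A b x j) /\ (forall i, 0 <= dslack A c y i * x i 0).
Proof.
move=> [hA hx] [hy hy0]; split.
  by move=> j; apply: mulr_ge0 => //; rewrite /slack subr_ge0.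
by move=> i; apply: mulr_ge0 => //; rewrite /dslack subr_ge0.
Qed.

Lemma weak_dual (x : 'cV[R]_n) (y : 'rV[R]_m) : primal_feasible A b x -> dual_feasible A c y ->
  cx c x <= yb b y.
Proof.
move=> hx hy; rewrite -subr_ge0 gap_identity.
case: (gap_ge0 hx hy) => h1 h2.
by apply: addr_ge0; apply: sumr_ge0 => ? _.
Qed.

Lemma strong_dual (xs : 'cV[R]_n) (ys : 'rV[R]_m) : primal_optimal A b c xs -> dual_optimal A b c ys ->
  yb b ys = cx c xs.
Proof.
move=> [fxs oxs] [fys oys]; apply/eqP; rewrite eq_le (weak_dual fxs fys) andbT.
apply/ler_addgt0Pr => e e0.
pose I := (('I_m + 'I_n) + 'I_1)%type.
pose Mi (r : I) (i : 'I_n) : R := match r with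
  | inl (inl j) => A j i | inl (inr i') => if i' == i then -1 else 0
  | inr _ => - c 0 i end.
pose v (r : I) : R := match r with
  | inl (inl j) => b j 0 | inl (inr i') => 0 | inr _ => - (cx c xs + e) end.
have sumI : forall F : I -> R, \sum_r F r =
   \sum_j F (inl (inl j)) + \sum_i F (inl (inr i)) + F (inr ord0).
  by move=> F; rewrite !big_sumType big_ord1.
case: (@farkas_ord I Mi v).
  move=> x; case: (pselect (exists r, v r < \sum_i Mi r i * x i)) => // Hn.
  exfalso.
  have Hall : forall r, \sum_i Mi r i * x i <= v r.
    by move=> r; rewrite leNgt; apply/negP => hlt; apply: Hn; exists r.
  pose xv : 'cV[R]_n := \col_i x i.
  have fx : primal_feasible A b xv.
    split.
      move=> j; rewrite (eq_bigr (fun i => A j i * x i)); first exact: (Hall (inl (inl j))).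
      by move=> i _; rewrite mxE.
    move=> i; have := Hall (inl (inr i)); rewrite /= (bigD1 i) //= eqxx big1.
      by rewrite mxE addr0 mulN1r oppr_le0.
    by move=> i' /negbTE; rewrite eq_sym => ->; rewrite mul0r.
  have := oxs _ fx; have := Hall (inr ord0); rewrite /= /cx.
  under eq_bigr do rewrite mulNr.
  move=> h1 h2; rewrite (eq_bigr (fun i => c 0 i * x i)) in h2; last by move=> i _; rewrite mxE.
  rewrite sumrN in h1; lra.
move=> y [y0 [yM yv]].
pose w := y (inr ord0).
have yM' : forall i, \sum_j y (inl (inl j)) * A j i - y (inl (inr i)) - w * c 0 i = 0.
  move=> i.
  have Ei : \sum_i' y (inl (inr i')) * Mi (inl (inr i')) i = - y (inl (inr i)).
    rewrite (bigD1 i) //= eqxx big1 ?addr0 ?mulrN1 // => i' /negbTE.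
    by rewrite eq_sym => ->; rewrite mulr0.
  have := yM i; rewrite sumI Ei /= mulrN /w => h; rewrite -[RHS]h.
  lra.
have yv' : \sum_j y (inl (inl j)) * b j 0 - w * (cx c xs + e) < 0.
  have Ez : \sum_i y (inl (inr i)) * v (inl (inr i)) = 0.
    by rewrite big1 // => i _; rewrite mulr0.
  move: yv; rewrite sumI Ez /= /w; lra.
have [w0|wpos] := eqVneq w 0.
  exfalso.
  have Hz : forall i, 0 <= \sum_j y (inl (inl j)) * A j i.
    move=> i; have := yM' i; rewrite w0 mul0r subr0 => /eqP; rewrite subr_eq0 => /eqP ->.
    exact: y0.
  move: yv'; rewrite w0 mul0r subr0; apply/negP; rewrite -leNgt.
  apply: (@le_trans _ _ (\sum_j y (inl (inl j)) * \sum_i A j i * xs i 0)).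
    under eq_bigr do rewrite mulr_sumr.
    rewrite exchange_big; apply: sumr_ge0 => i _.
    under eq_bigr do rewrite mulrA.
    rewrite -mulr_suml; apply: mulr_ge0; first exact: Hz.
    by case: fxs.
  apply: ler_sum => j _; apply: ler_wpM2l; first exact: y0.
  by case: fxs => h _; apply: h.
have wgt : 0 < w by rewrite lt_def wpos y0.
pose y' : 'rV[R]_m := \row_j (y (inl (inl j)) / w).
have fy' : dual_feasible A c y'.
  split.
    move=> i; under eq_bigr do rewrite mxE mulrAC.
    rewrite -mulr_suml ler_pdivlMr // mulrC.
    have := yM' i; have := y0 (inl (inr i)); lra.
  by move=> j; rewrite mxE divr_ge0 // ltW.
apply: (le_trans (oys _ fy')); apply: ltW.
rewrite /yb; under eq_bigr do rewrite mxE mulrAC.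
rewrite -mulr_suml ltr_pdivrMr //; lra.
Qed.

End Duality.

Section Norms.
Variable R : realType.
Variables (I : finType) (P : pred I).
Implicit Types f g : I -> R.

Lemma sumsq_ge0 f : 0 <= \sum_(i | P i) f i ^+ 2.
Proof. by apply: sumr_ge0 => i _; apply: sqr_ge0. Qed.

Lemma term_le_sumsq f j : P j -> f j ^+ 2 <= \sum_(i | P i) f i ^+ 2.
Proof.
move=> Pj; rewrite (bigD1 j) //= lerDl; apply: sumr_ge0 => i _; apply: sqr_ge0.
Qed.

Lemma abs_le_norm f j : P j -> `|f j| <= Num.sqrt (\sum_(i | P i) f i ^+ 2).
Proof.
by move=> Pj; rewrite -sqrtr_sqr ler_sqrt ?sumsq_ge0 // term_le_sumsq.
Qed.

Lemma sumsq_eq0 f : \sum_(i | P i) f i ^+ 2 = 0 -> forall j, P j -> f j = 0.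
Proof.
move=> h j Pj; have := term_le_sumsq f Pj; rewrite h => h1.
have h2 := sqr_ge0 (f j).
by apply/eqP; rewrite -sqrf_eq0 eq_le h1 h2.
Qed.

Lemma cauchy_schwarz f g :
  (\sum_(i | P i) f i * g i) ^+ 2 <=
  (\sum_(i | P i) f i ^+ 2) * (\sum_(i | P i) g i ^+ 2).
Proof.
set F := \sum_(i | P i) f i ^+ 2; set G := \sum_(i | P i) g i ^+ 2.
set H := \sum_(i | P i) f i * g i.
have F0 : 0 <= F by apply: sumsq_ge0.
have [Fz|Fpos] := eqVneq F 0.
  have -> : H = 0.
    by rewrite /H big1 // => i Pi; rewrite (sumsq_eq0 Fz Pi) mul0r.
  by rewrite Fz expr0n mul0r.
have Fgt : 0 < F by rewrite lt_def Fpos F0.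
have h : 0 <= \sum_(i | P i) (H * f i - F * g i) ^+ 2 by apply: sumsq_ge0.
have E : \sum_(i | P i) (H * f i - F * g i) ^+ 2 = F * (F * G - H ^+ 2).
  have -> : \sum_(i | P i) (H * f i - F * g i) ^+ 2 =
    \sum_(i | P i) (H ^+ 2 * f i ^+ 2 - (2 * H * F) * (f i * g i) + F ^+ 2 * g i ^+ 2).
    by apply: eq_bigr => i _; ring.
  rewrite big_split /= sumrB -!mulr_sumr -/F -/G -/H; ring.
rewrite E in h; rewrite -subr_ge0; rewrite pmulr_rge0 // in h.
Qed.

Lemma minkowski f g :
  Num.sqrt (\sum_(i | P i) (f i + g i) ^+ 2) <=
  Num.sqrt (\sum_(i | P i) f i ^+ 2) + Num.sqrt (\sum_(i | P i) g i ^+ 2).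
Proof.
set F := \sum_(i | P i) f i ^+ 2; set G := \sum_(i | P i) g i ^+ 2.
set H := \sum_(i | P i) f i * g i.
have F0 : 0 <= F by apply: sumsq_ge0.
have G0 : 0 <= G by apply: sumsq_ge0.
have E : \sum_(i | P i) (f i + g i) ^+ 2 = F + 2 * H + G.
  have -> : \sum_(i | P i) (f i + g i) ^+ 2 =
    \sum_(i | P i) (f i ^+ 2 + 2 * (f i * g i) + g i ^+ 2).
    by apply: eq_bigr => i _; ring.
  by rewrite !big_split /= -mulr_sumr.
have HFG : H <= Num.sqrt F * Num.sqrt G.
  rewrite -sqrtrM // (le_trans (ler_norm H)) // -sqrtr_sqr ler_sqrt.
    exact: cauchy_schwarz.
  exact: mulr_ge0.
have sF := sqrtr_ge0 F; have sG := sqrtr_ge0 G.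
rewrite -(@ler_pXn2r _ 2) // ?nnegrE ?sqrtr_ge0 ?addr_ge0 //.
rewrite sqr_sqrtr E; last by rewrite -E sumsq_ge0.
have h1 := sqr_sqrtr F0; have h2 := sqr_sqrtr G0.
rewrite sqrrD h1 h2; nra.
Qed.

Lemma norm_le_sum f : (forall i, P i -> 0 <= f i) ->
  Num.sqrt (\sum_(i | P i) f i ^+ 2) <= \sum_(i | P i) f i.
Proof.
move=> h.
have : 0 <= \sum_(i | P i) f i /\ \sum_(i | P i) f i ^+ 2 <= (\sum_(i | P i) f i) ^+ 2.
  apply: (big_rec2 (fun y1 y2 => 0 <= y2 /\ y1 <= y2 ^+ 2)).
    by rewrite expr0n lexx.
  move=> i y1 y2 Pi [hy2 hy]; have hi := h i Pi; split; first exact: addr_ge0.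
  nra.
move=> [h1 h2]; rewrite -(ger0_norm h1) -sqrtr_sqr ler_sqrt //.
exact: sqr_ge0.
Qed.

Lemma sumsq_sub (Q : pred I) f : (forall i, Q i -> P i) ->
  \sum_(i | Q i) f i ^+ 2 <= \sum_(i | P i) f i ^+ 2.
Proof.
move=> hQ; rewrite [X in _ <= X](bigID Q) /=.
rewrite [X in _ <= X + _](eq_bigl Q); last first.
  by move=> i; case Qi: (Q i); rewrite ?andbT ?andbF ?(hQ i Qi).
by rewrite lerDl; apply: sumr_ge0 => i _; apply: sqr_ge0.
Qed.

End Norms.

Section Spec.
Local Open Scope classical_set_scope.
Variables (R : realType) (m n : nat) (A : 'M[R]_(m, n)).
Local Notation K := (specnorm A).
Local Notation S := [set norm2 (A *m x) | x in [set x : 'cV[R]_n | norm2 x = 1]].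

Lemma norm2_ge0 p (x : 'cV[R]_p) : 0 <= norm2 x.
Proof. exact: sqrtr_ge0. Qed.

Lemma norm2_scale p a (x : 'cV[R]_p) : norm2 (a *: x) = `|a| * norm2 x.
Proof.
rewrite /norm2; under eq_bigr do rewrite mxE exprMn.
by rewrite -mulr_sumr sqrtrM ?sqr_ge0 // sqrtr_sqr.
Qed.

Lemma norm2_eq0 p (x : 'cV[R]_p) : norm2 x = 0 -> x = 0.
Proof.
move=> /eqP; rewrite /norm2 sqrtr_eq0 => h.
have h0 : \sum_i x i 0 ^+ 2 = 0.
  by apply/eqP; rewrite eq_le h; apply: (sumsq_ge0 (fun _ => true)).
apply/matrixP => i j; rewrite ord1 mxE.
exact: (sumsq_eq0 h0).
Qed.

Lemma entry_le_norm2 p (x : 'cV[R]_p) i : `|x i 0| <= norm2 x.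
Proof. by apply: (abs_le_norm (P := fun _ => true) (fun i => x i 0)). Qed.

Lemma spec_bounded : has_ubound S.
Proof.
exists (\sum_j \sum_i `|A j i|) => _ [x /= hx <-].
rewrite /norm2.
apply: (@le_trans _ _ (\sum_j `|(A *m x) j 0|)).
  rewrite (eq_bigr (fun j => `|(A *m x) j 0| ^+ 2)); last first.
    by move=> j _; rewrite real_normK // num_real.
  by apply: (norm_le_sum (P := fun _ => true)) => j _.
apply: ler_sum => j _; rewrite mxE.
apply: (le_trans (ler_norm_sum _ _ _)); apply: ler_sum => i _.
rewrite normrM; rewrite -[X in _ <= X]mulr1; apply: ler_wpM2l => //.
by rewrite -hx; apply: entry_le_norm2.
Qed.

Lemma spec_ge0 : 0 <= K.
Proof.
rewrite /specnorm; case: (pselect (has_sup S)) => [hs|hs]; last by rewrite sup_out.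
case: (hs) => [[e he] _]; apply: le_trans (sup_upper_bound hs he).
by case: he => x _ <-; apply: norm2_ge0.
Qed.

Lemma spec_bound z : norm2 (A *m z) <= K * norm2 z.
Proof.
have [z0|zn] := eqVneq (norm2 z) 0.
  rewrite z0 mulr0 (norm2_eq0 z0) mulmx0.
  by rewrite /norm2 big1 ?sqrtr0 // => i _; rewrite mxE expr0n.
have zpos : 0 < norm2 z by rewrite lt_def zn norm2_ge0.
pose u := (norm2 z)^-1 *: z.
have hu : norm2 u = 1.
  by rewrite norm2_scale ger0_norm ?invr_ge0 ?norm2_ge0 // mulVf.
have inS : S (norm2 (A *m u)) by exists u.
have hs : has_sup S by split; [exists (norm2 (A *m u)) | apply: spec_bounded].
have := sup_upper_bound hs inS; rewrite /u -scalemxAr norm2_scale.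
rewrite ger0_norm ?invr_ge0 ?norm2_ge0 // -/(specnorm A).
by rewrite mulrC -ler_pdivlMr ?invr_gt0 // invrK.
Qed.

Lemma column_bound k : Num.sqrt (\sum_j A j k ^+ 2) <= K.
Proof.
pose e : 'cV[R]_n := \col_i (if i == k then 1 else 0).
have he : norm2 e = 1.
  rewrite /norm2 (bigD1 k) //= big1 ?mxE ?eqxx ?expr1n ?addr0 ?sqrtr1 //.
  by move=> i /negbTE hi; rewrite mxE hi expr0n.
have := spec_bound e; rewrite he mulr1; apply: le_trans.
rewrite /norm2 le_eqVlt; apply/orP; left; apply/eqP; congr Num.sqrt.
apply: eq_bigr => j _; rewrite mxE (bigD1 k) //= big1 ?mxE ?eqxx ?mulr1 ?addr0 //.
by move=> i /negbTE hi; rewrite mxE hi mulr0.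
Qed.

End Spec.

Lemma kernel_lemma (R : fieldType) (I J : finType) (P : pred I) (Q : pred J)
  (B : J -> I -> R) : (#|Q| < #|P|)%N ->
  exists z : I -> R, (exists2 i, P i & z i != 0) /\ (forall i, ~~ P i -> z i = 0) /\
    (forall j, Q j -> \sum_(i | P i) B j i * z i = 0).
Proof.
move=> hc.
pose ev : 'I_#|P| -> I := enum_val. pose ew : 'I_#|Q| -> J := enum_val.
pose Mt : 'M[R]_(#|P|, #|Q|) := \matrix_(a, b) B (ew b) (ev a).
have hk : kermx Mt != 0.
  rewrite -mxrank_eq0 mxrank_ker subn_eq0 -ltnNge.
  exact: leq_ltn_trans (rank_leq_col Mt) hc.
have [r hr] : exists r, row r (kermx Mt) != 0.
  case/boolP: [exists r, row r (kermx Mt) != 0] => [/existsP //|/existsPn h].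
  move/negP: hk; case; apply/eqP/row_matrixP => r'; rewrite row0.
  by have := h r'; rewrite negbK => /eqP.
pose u := row r (kermx Mt).
have hu : u *m Mt = 0 by rewrite /u -row_mul mulmx_ker row0.
have [a0 ha0] : exists a, u 0 a != 0.
  case/boolP: [exists a, u 0 a != 0] => [/existsP //|/existsPn h].
  move/negP: hr; case. apply/eqP/rowP => a. rewrite mxE.
  by have := h a; rewrite negbK mxE => /eqP ->; rewrite mxE.
pose z i := \sum_(a | ev a == i) u 0 a.
have zev : forall a, z (ev a) = u 0 a.
  move=> a; rewrite /z (big_pred1 a) // => a'.
  by apply/eqP/eqP => [/enum_val_inj|->].
have zoff : forall i, ~~ P i -> z i = 0.
  move=> i hi; rewrite /z big_pred0 // => a; apply/negP => /eqP h.
  have := enum_valP a; rewrite -/ev h => hP; move/negP: hi; apply; exact: hP.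
exists z; split; first by exists (ev a0); [exact: (enum_valP a0)|rewrite zev].
split => // j hj.
have -> : \sum_(i | P i) B j i * z i = \sum_i B j i * z i.
  rewrite [RHS](bigID P) /= [X in _ = _ + X]big1 ?addr0 // => i hi.
  by rewrite zoff ?mulr0.
have -> : \sum_i B j i * z i = \sum_a B j (ev a) * u 0 a.
  under eq_bigr do rewrite /z mulr_sumr.
  rewrite (exchange_big_dep xpredT) //=; apply: eq_bigr => a _.
  by rewrite (big_pred1 (ev a)) // => i; rewrite eq_sym.
have hj' : j \in Q by exact: hj.
pose bj : 'I_#|Q| := enum_rank_in hj' j.
have ebj : ew bj = j by rewrite /ew /bj enum_rankK_in.
have := congr1 (fun M : 'M[R]_(1, #|Q|) => M 0 bj) hu; rewrite !mxE => h; rewrite -[RHS]h.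
by apply: eq_bigr => a _; rewrite !mxE ebj mulrC.
Qed.


Section MinR.
Variable R : realType.

Lemma foldr_min_le (x0 : R) s : foldr Num.min x0 s <= x0 /\
  forall x, x \in s -> foldr Num.min x0 s <= x.
Proof.
elim: s => [|y s [IH1 IH2]] /=; first by split.
split; first by rewrite ge_min IH1 orbT.
move=> x; rewrite inE => /orP [/eqP ->|hx]; first by rewrite ge_min lexx.
by rewrite ge_min IH2 ?orbT.
Qed.

Lemma minR_le (s : seq R) x : x \in s -> minR s <= x.
Proof.
case: s => [|y s] //= ; rewrite inE => /orP [/eqP ->|hx].
  by case: (foldr_min_le y s).
by case: (foldr_min_le y s) => _; apply.
Qed.

Lemma minR_ge0 (s : seq R) : (forall x, x \in s -> 0 <= x) -> 0 <= minR s.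
Proof.
case: s => [|y s] //= h.
have hy : 0 <= y by apply: h; rewrite inE eqxx.
have hs : forall x, x \in s -> 0 <= x by move=> x hx; apply: h; rewrite inE hx orbT.
clear h; elim: s hs => [|z s IH] hs //=.
rewrite le_min; apply/andP; split; first by apply: hs; rewrite inE eqxx.
by apply: IH => x hx; apply: hs; rewrite inE hx orbT.
Qed.

End MinR.

Lemma imgf (T : finType) (S : eqType) (f : T -> S) (P : {set T}) x :
  x \in P -> f x \in [seq f i | i in P].
Proof. by move=> hx; rewrite (fintype.image_f f hx). Qed.

Section Main.
Variables (R : realType) (m n : nat) (A : 'M[R]_(m, n)) (b : 'cV[R]_m)
  (c : 'rV[R]_n) (xs : 'cV[R]_n) (ys : 'rV[R]_m).
Hypothesis Hxs : primal_optimal A b c xs.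
Hypothesis Hys : dual_optimal A b c ys.

Local Notation U := (Uset xs).
Local Notation V := (Vset ys).
Local Notation lam := (lambdaLP A b c xs ys).
Local Notation gam := (gammaLP A xs ys).
Local Notation K := (specnorm A).

Lemma fxs : primal_feasible A b xs. Proof. by case: Hxs. Qed.
Lemma fys : dual_feasible A c ys. Proof. by case: Hys. Qed.

Lemma lam_ge0 : 0 <= lam.
Proof.
apply: minR_ge0 => x; rewrite !mem_cat => /orP [h|/orP [h|/orP [h|h]]];
  case/mapP: h => i hi ->.
- by case: fxs.
- by case: fys.
- by rewrite /slack subr_ge0; case: fxs.
- by rewrite /dslack subr_ge0; case: fys.
Qed.

Lemma lam_xs i : i \in U -> lam <= xs i 0.
Proof. by move=> hi; apply: minR_le; rewrite mem_cat (imgf (fun i => xs i 0)). Qed.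
Lemma lam_ys j : j \in V -> lam <= ys 0 j.
Proof. by move=> hj; apply: minR_le; rewrite !mem_cat (imgf (fun j => ys 0 j)) ?orbT. Qed.
Lemma lam_slack j : j \in ~: V -> lam <= slack A b xs j.
Proof. by move=> hj; apply: minR_le; rewrite !mem_cat (imgf (slack A b xs)) ?orbT. Qed.
Lemma lam_dslack i : i \in ~: U -> lam <= dslack A c ys i.
Proof. by move=> hi; apply: minR_le; rewrite !mem_cat (imgf (dslack A c ys)) ?orbT. Qed.

Lemma sdual : yb b ys = cx c xs.
Proof. exact: strong_dual Hxs Hys. Qed.

Lemma compl_slack : (forall j, j \in V -> slack A b xs j = 0) /\
  (forall i, i \in U -> dslack A c ys i = 0).
Proof.
have h := gap_identity A b c xs ys; rewrite sdual subrr in h.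
case: (gap_ge0 fxs fys) => h1 h2.
have s1 : 0 <= \sum_j ys 0 j * slack A b xs j by apply: sumr_ge0 => j _; apply: h1.
have s2 : 0 <= \sum_i dslack A c ys i * xs i 0 by apply: sumr_ge0 => i _; apply: h2.
have e1 : \sum_j ys 0 j * slack A b xs j = 0 by lra.
have e2 : \sum_i dslack A c ys i * xs i 0 = 0 by lra.
split.
  move=> j hj.
  have hz : ys 0 j * slack A b xs j = 0 by apply: (psumr_eq0P _ e1) => // ? _; apply: h1.
  move/eqP: hz; rewrite mulf_eq0 => /orP [/eqP h0|/eqP //].
  by move: hj; rewrite inE h0 ltxx.
move=> i hi.
have hz : dslack A c ys i * xs i 0 = 0 by apply: (psumr_eq0P _ e2) => // ? _; apply: h2.
move/eqP: hz; rewrite mulf_eq0 => /orP [/eqP //|/eqP h0].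
by move: hi; rewrite inE h0 ltxx.
Qed.

Lemma gap_eq (x : 'cV[R]_n) : cx c xs - cx c x =
  \sum_j ys 0 j * slack A b x j + \sum_i dslack A c ys i * x i 0.
Proof. by rewrite -gap_identity sdual. Qed.

Lemma gam_le k : k \in U -> gam <= distVk A U V k.
Proof. by move=> hk; apply: minR_le; rewrite (imgf (distVk A U V)). Qed.

Lemma dist_le k (t : 'I_n -> R) : distVk A U V k <=
  Num.sqrt (\sum_(j in V) (A j k - \sum_(i in U :\ k) t i * A j i) ^+ 2).
Proof.
rewrite /distVk; apply: ge_inf; last by exists t.
by exists 0 => _ [t' _ <-]; apply: sqrtr_ge0.
Qed.

Lemma gamma_key k (z : 'I_n -> R) : k \in U ->
  gam * `|z k| <= Num.sqrt (\sum_(j in V) (\sum_(i in U) A j i * z i) ^+ 2).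
Proof.
move=> hk; have [z0|zn] := eqVneq (z k) 0.
  by rewrite z0 normr0 mulr0 sqrtr_ge0.
have := le_trans (gam_le hk) (dist_le k (fun i => - z i / z k)).
have E : forall j, A j k - \sum_(i in U :\ k) (- z i / z k) * A j i =
                   (\sum_(i in U) A j i * z i) / z k.
  move=> j; rewrite [in RHS](bigD1 k) //= mulrDl mulfK //.
  have E2 : \sum_(i in U | i != k) A j i * z i = \sum_(i in U :\ k) A j i * z i.
    by apply: eq_bigl => i; rewrite in_setD1 andbC.
  rewrite E2 mulr_suml -sumrN; congr (_ + _); apply: eq_bigr => i _.
  by field.
under eq_bigr do rewrite E expr_div_n.
rewrite -mulr_suml sqrtrM ?sumsq_ge0 //.
rewrite -exprVn sqrtr_sqr normrV ?unitfE // => h.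
by rewrite -ler_pdivlMr ?normr_gt0.
Qed.

Lemma term_le_sum (I : finType) (f : I -> R) j : (forall i, 0 <= f i) ->
  f j <= \sum_i f i.
Proof.
by move=> h; rewrite (bigD1 j) //= lerDl; apply: sumr_ge0 => i _; apply: h.
Qed.

Hypothesis Uys : forall y, dual_optimal A b c y -> y = ys.
Hypothesis lam_pos : 0 < lam.
Hypothesis gam_pos : 0 < gam.

Lemma card_UV_le : (#|U| <= #|V|)%N.
Proof.
rewrite leqNgt; apply/negP => hc.
case: (@kernel_lemma R _ _ (fun i => i \in U) (fun j => j \in V) (fun j i => A j i) hc).
move=> z [[k hk zk] [_ hz]].
have := gamma_key z hk.
rewrite big1; last by move=> j hj; rewrite hz // expr0n.
rewrite sqrtr0 => h.
have : 0 < gam * `|z k| by rewrite mulr_gt0 // normr_gt0.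
by rewrite ltNge h.
Qed.

Lemma card_VU_le : (#|V| <= #|U|)%N.
Proof.
rewrite leqNgt; apply/negP => hc.
case: (@kernel_lemma R _ _ (fun j => j \in V) (fun i => i \in U) (fun i j => A j i) hc).
move=> w [[j0 hj0 wj0] [woff hw]].
pose W i := \sum_j w j * A j i.
have WU : forall i, i \in U -> W i = 0.
  move=> i hi; rewrite -(hw i hi) /W (bigID (fun j => j \in V)) /=.
  rewrite [X in _ + X]big1 ?addr0; last by move=> j hj; rewrite woff ?mul0r.
  by apply: eq_bigr => j _; rewrite mulrC.
pose Den := 1 + \sum_j `|w j| + \sum_i `|W i|.
have Den1 : 1 <= Den.
  rewrite /Den -addrA lerDl; apply: addr_ge0; apply: sumr_ge0 => ? _; exact: normr_ge0.
have Dpos : 0 < Den by apply: lt_le_trans Den1.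
pose eps := lam / Den.
have epos : 0 < eps by rewrite divr_gt0.
have eD : eps * Den = lam by rewrite /eps mulfVK // gt_eqF.
have wle : forall j, eps * `|w j| <= lam.
  move=> j; rewrite -eD ler_pM2l //.
  apply: (le_trans (@term_le_sum _ (fun j => `|w j|) j (fun _ => normr_ge0 _))).
  rewrite /Den -addrA addrCA lerDl; apply: addr_ge0 => //.
  by apply: sumr_ge0 => ? _; exact: normr_ge0.
have Wle : forall i, eps * `|W i| <= lam.
  move=> i; rewrite -eD ler_pM2l //.
  apply: (le_trans (@term_le_sum _ (fun i => `|W i|) i (fun _ => normr_ge0 _))).
  rewrite /Den lerDr; apply: addr_ge0 => //.
  by apply: sumr_ge0 => ? _; exact: normr_ge0.
pose y' : 'rV[R]_m := \row_j (ys 0 j + eps * w j).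
have fy' : dual_feasible A c y'.
  split.
    move=> i.
    have -> : \sum_j y' 0 j * A j i = \sum_j ys 0 j * A j i + eps * W i.
      rewrite /W mulr_sumr -big_split; apply: eq_bigr => j _.
      by rewrite mxE mulrDl mulrA.
    case: (boolP (i \in U)) => hi.
      by rewrite WU // mulr0 addr0; case: fys => h _; apply: h.
    have := lam_dslack (i := i); rewrite inE hi => /(_ isT); rewrite /dslack.
    move=> h0; have h1 := Wle i.
    have h2 : - W i <= `|W i| by rewrite -normrN ler_norm.
    have h4 : - (eps * `|W i|) <= eps * W i by nra.
    lra.
  move=> j; rewrite mxE.
  case: (boolP (j \in V)) => hj.
    have h0 := lam_ys hj; have h1 := wle j.
    have h2 : - w j <= `|w j| by rewrite -normrN ler_norm.
    have h4 : - (eps * `|w j|) <= eps * w j by nra.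
    lra.
  rewrite woff // mulr0 addr0; case: fys => _; apply.
have obj : yb b y' = yb b ys.
  rewrite /yb.
  have -> : \sum_j y' 0 j * b j 0 = \sum_j ys 0 j * b j 0 + eps * \sum_j w j * b j 0.
    rewrite mulr_sumr -big_split; apply: eq_bigr => j _.
    by rewrite mxE mulrDl mulrA.
  suff -> : \sum_j w j * b j 0 = 0 by rewrite mulr0 addr0.
  have -> : \sum_j w j * b j 0 = \sum_j w j * \sum_i A j i * xs i 0.
    apply: eq_bigr => j _; case: (boolP (j \in V)) => hj; last by rewrite woff ?mul0r.
    have := (compl_slack).1 j hj; rewrite /slack => /eqP; rewrite subr_eq0 => /eqP ->.
    by [].
  under eq_bigr do rewrite mulr_sumr.
  rewrite exchange_big big1 // => i _.
  under eq_bigr do rewrite mulrA.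
  rewrite -mulr_suml -/(W i).
  case: (boolP (i \in U)) => hi; first by rewrite WU ?mul0r.
  have : ~~ (0 < xs i 0) by move: hi; rewrite inE.
  case: fxs => _ /(_ i) hx; rewrite -leNgt => hx'.
  have -> : xs i 0 = 0 by apply/eqP; rewrite eq_le hx hx'.
  by rewrite mulr0.
have oy' : dual_optimal A b c y'.
  split => // y'' hy''; rewrite obj; case: Hys => _; apply; exact: hy''.
have := Uys oy' => /(congr1 (fun M : 'rV[R]_m => M 0 j0)); rewrite mxE => /eqP.
rewrite -subr_eq0 addrAC subrr add0r mulf_eq0 (negbTE wj0) orbF => /eqP e0.
by move: epos; rewrite e0 ltxx.
Qed.

Lemma card_UV : (#|~: U| + #|V| = n)%N.
Proof.
have e : #|U| = #|V| by apply/anti_leq; rewrite card_UV_le card_VU_le.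
by rewrite -e addnC cardsC card_ord.
Qed.

Lemma U_nonempty : exists k0, k0 \in U.
Proof.
case: (set_0Vmem U) => [U0|[k0 hk0]]; last by exists k0.
by move: gam_pos; rewrite /gammaLP U0 /image_mem enum_set0 /= ltxx.
Qed.

Lemma gam_le_K : gam <= K.
Proof.
case: U_nonempty => k0 hk0.
apply: (le_trans (gam_le hk0)); apply: (le_trans (dist_le k0 (fun _ => 0))).
apply: le_trans (column_bound A k0).
rewrite ler_sqrt; last by apply: (sumsq_ge0 (fun _ => true)).
rewrite (eq_bigr (fun j => A j k0 ^+ 2)); last first.
  by move=> j _; rewrite big1 ?subr0 // => i _; rewrite mul0r.
by apply: sumsq_sub.
Qed.

Lemma sum_restrict (I : finType) (P : pred I) (f g : I -> R) :
  (forall i, 0 <= g i) -> (forall i, P i -> f i <= g i) ->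
  \sum_(i | P i) f i <= \sum_i g i.
Proof.
move=> h0 h1; apply: (@le_trans _ _ (\sum_(i | P i) g i)); first exact: ler_sum.
rewrite [X in _ <= X](bigID P) /= lerDl; apply: sumr_ge0 => i _; exact: h0.
Qed.

Lemma xs_off i : i \notin U -> xs i 0 = 0.
Proof.
move=> hi; have : ~~ (0 < xs i 0) by move: hi; rewrite inE.
by case: fxs => _ /(_ i) hx; rewrite -leNgt => hx'; apply/eqP; rewrite eq_le hx hx'.
Qed.

Definition Ssum (x : 'cV[R]_n) :=
  \sum_(j in V) slack A b x j + \sum_(i in ~: U) x i 0.

Lemma slack_ge0 x : primal_feasible A b x -> forall j, 0 <= slack A b x j.
Proof. by case => h _ j; rewrite /slack subr_ge0. Qed.

Lemma Ssum_ge0 x : primal_feasible A b x -> 0 <= Ssum x.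
Proof.
move=> fx; apply: addr_ge0; apply: sumr_ge0 => i _; first exact: slack_ge0.
by case: fx.
Qed.

Lemma lamS x : primal_feasible A b x -> lam * Ssum x <= cx c xs - cx c x.
Proof.
move=> fx; rewrite gap_eq /Ssum mulrDr !mulr_sumr.
apply: lerD; apply: sum_restrict.
- move=> j; apply: mulr_ge0; [by case: fys|exact: slack_ge0].
- move=> j hj; apply: ler_wpM2r; [exact: slack_ge0|exact: lam_ys].
- move=> i; apply: mulr_ge0; [by rewrite /dslack subr_ge0; case: fys|by case: fx].
- move=> i hi; apply: ler_wpM2r; [by case: fx|exact: lam_dslack].
Qed.

Lemma zU_bound x : primal_feasible A b x -> forall k, k \in U ->
  gam * `|x k 0 - xs k 0| <= (1 + K) * Ssum x.
Proof.
move=> fx k hk.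
apply: (le_trans (gamma_key (fun i => x i 0 - xs i 0) hk)).
pose wv : 'cV[R]_n := \col_i (if i \in U then 0 else x i 0).
have Ej : forall j, j \in V -> \sum_(i in U) A j i * (x i 0 - xs i 0) =
    - slack A b x j + - (A *m wv) j 0.
  move=> j hj.
  have h1 : \sum_i A j i * (x i 0 - xs i 0) = - slack A b x j.
    under eq_bigr do rewrite mulrBr.
    rewrite sumrB; have := (compl_slack).1 j hj; rewrite /slack => h2.
    have : \sum_i A j i * xs i 0 = b j 0 by lra.
    move=> ->; lra.
  have h3 : \sum_(i in ~: U) A j i * (x i 0 - xs i 0) = (A *m wv) j 0.
    rewrite mxE [RHS](bigID (fun i => i \in ~: U)) /= [X in _ = _ + X]big1 ?addr0.
      apply: eq_bigr => i; rewrite finset.in_setC => hi; rewrite mxE (negbTE hi).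
      by rewrite xs_off // subr0.
    by move=> i; rewrite finset.in_setC negbK => hi; rewrite mxE hi mulr0.
  have := h1; rewrite (bigID (fun i => i \in U)) /=.
  have h4 : \sum_(i | i \notin U) A j i * (x i 0 - xs i 0) =
            \sum_(i in ~: U) A j i * (x i 0 - xs i 0).
    by apply: eq_bigl => i; rewrite finset.in_setC.
  rewrite h4 h3; lra.
have E : \sum_(j in V) (\sum_(i in U) A j i * (x i 0 - xs i 0)) ^+ 2 =
         \sum_(j in V) (- slack A b x j + - (A *m wv) j 0) ^+ 2.
  by apply: eq_bigr => j hj; rewrite Ej.
rewrite E; apply: (le_trans (minkowski _ _ _)).
under eq_bigr do rewrite sqrrN.
under [X in _ + Num.sqrt X <= _]eq_bigr do rewrite sqrrN.
have hs : Num.sqrt (\sum_(j in V) slack A b x j ^+ 2) <= \sum_(j in V) slack A b x j.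
  by apply: norm_le_sum => j _; apply: slack_ge0.
have hw : Num.sqrt (\sum_(j in V) (A *m wv) j 0 ^+ 2) <= K * \sum_(i in ~: U) x i 0.
  apply: (@le_trans _ _ (norm2 (A *m wv))).
    rewrite ler_sqrt; last by apply: (sumsq_ge0 (fun _ => true)).
    by apply: sumsq_sub.
  apply: (le_trans (spec_bound A wv)); apply: ler_wpM2l; first exact: spec_ge0.
  apply: (@le_trans _ _ (\sum_i wv i 0)).
    by apply: (norm_le_sum (P := fun _ => true)) => i _; rewrite mxE; case: ifP => //; case: fx.
  rewrite [X in X <= _](bigID (fun i => i \in ~: U)) /= [X in _ + X]big1 ?addr0.
    by rewrite le_eqVlt; apply/orP; left; apply/eqP; apply: eq_bigr => i; rewrite finset.in_setC mxE => /negbTE ->.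
  by move=> i; rewrite finset.in_setC negbK => hi; rewrite mxE hi.
have K0 := spec_ge0 A.
have s1 : 0 <= \sum_(j in V) slack A b x j by apply: sumr_ge0 => j _; apply: slack_ge0.
have s2 : 0 <= \sum_(i in ~: U) x i 0 by apply: sumr_ge0 => i _; case: fx.
rewrite /Ssum; nra.
Qed.


Lemma sep x : primal_feasible A b x ->
  cx c xs - cx c x < lam ^+ 2 * gam / (2 * Num.max 1 (Num.sqrt n%:R * K) * (1 + K)) ->
  UV_of_is A b x U V.
Proof.
move=> fx hg.
set Mx := Num.max 1 (Num.sqrt n%:R * K).
have K0 := spec_ge0 A.
have M1 : 1 <= Mx by rewrite le_max lexx.
have MK : Num.sqrt n%:R * K <= Mx by rewrite le_max lexx orbT.
have Dpos : 0 < 2 * Mx * (1 + K).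
  by apply: mulr_gt0; [apply: mulr_gt0 => //; lra | lra].
set S := Ssum x.
have S0 : 0 <= S := Ssum_ge0 fx.
have hS : S * (2 * Mx * (1 + K)) < lam * gam.
  have := le_lt_trans (lamS fx) hg; rewrite ltr_pdivlMr // => h.
  by rewrite -(ltr_pM2l lam_pos) mulrA; move: h; rewrite expr2 -(mulrA lam lam).
pose B := (1 + K) * S / gam.
have Bg : B * gam = (1 + K) * S by rewrite /B divfK // gt_eqF.
have B0 : 0 <= B.
  rewrite /B divr_ge0 ?mulr_ge0 //; first lra. exact: ltW.
have gK1 : gam <= 1 + K by have := gam_le_K; lra.
have xS : forall i, i \notin U -> x i 0 <= S.
  move=> i hi; rewrite /S /Ssum.
  have h1 : 0 <= \sum_(j in V) slack A b x j by apply: sumr_ge0 => j _; apply: slack_ge0.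
  have h2 : x i 0 <= \sum_(i in ~: U) x i 0.
    rewrite (bigD1 i) /=; last by rewrite finset.in_setC.
    rewrite lerDl; apply: sumr_ge0 => i' _; by case: fx.
  lra.
have sS : forall j, j \in V -> slack A b x j <= S.
  move=> j hj; rewrite /S /Ssum.
  have h1 : 0 <= \sum_(i in ~: U) x i 0 by apply: sumr_ge0 => i' _; case: fx.
  have h2 : slack A b x j <= \sum_(j in V) slack A b x j.
    rewrite (bigD1 j) //= lerDl; apply: sumr_ge0 => j' _; exact: slack_ge0.
  lra.
have SB : S <= B.
  rewrite /B ler_pdivlMr //; have gp := gam_pos; nra.
have zb : forall i, `|x i 0 - xs i 0| <= B.
  move=> i; case: (boolP (i \in U)) => hi.
    by rewrite /B ler_pdivlMr // mulrC; apply: zU_bound.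
  rewrite xs_off // subr0 ger0_norm; last by case: fx.
  exact: le_trans (xS i hi) SB.
have nz : norm2 (x - xs) <= Num.sqrt n%:R * B.
  rewrite /norm2 -(ger0_norm B0) -sqrtr_sqr -sqrtrM ?ler0n //.
  rewrite ler_sqrt; last by rewrite mulr_ge0 ?ler0n ?sqr_ge0.
  apply: (@le_trans _ _ (\sum_(i < n) B ^+ 2)).
    apply: ler_sum => i _; rewrite !mxE; set z := x i 0 + - xs i 0.
    have := zb i; rewrite ler_norml -/z => /andP [h1 h2]; rewrite -subr_ge0; have -> : B ^+ 2 - z ^+ 2 = (B - z) * (B + z) by ring.
    apply: mulr_ge0; lra.
  by rewrite sumr_const card_ord mulr_natl.
have hMB : Mx * B < lam / 2.
  have e : 2 * Mx * B * gam = S * (2 * Mx * (1 + K)).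
    by rewrite -mulrA Bg; ring.
  have : 2 * Mx * B * gam < lam * gam by rewrite e.
  rewrite ltr_pM2r // => h; lra.
have hS2 : S < lam / 2.
  have h1 : lam * gam <= lam * (Mx * (1 + K)).
    rewrite ler_wpM2l //; first exact: ltW.
    apply: (le_trans gK1); rewrite -[X in X <= _]mul1r; apply: ler_wpM2r => //; lra.
  have : (2 * S) * (Mx * (1 + K)) < lam * (Mx * (1 + K)).
    by apply: lt_le_trans h1; rewrite -mulrA mulrA (mulrC 2) -mulrA mulrA; move: hS; rewrite !mulrA.
  rewrite ltr_pM2r; first by lra.
  by apply: mulr_gt0; lra.
have hBM : B <= Mx * B by rewrite -[X in X <= _]mul1r ler_wpM2r.
have uU : forall k, k \in U -> lam / 2 < x k 0.
  move=> k hk; have h1 := lam_xs hk; have := zb k; rewrite ler_norml => /andP [h2 h3].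
  lra.
have uV : forall j, j \notin V -> lam / 2 < slack A b x j.
  move=> j hj.
  have e : slack A b x j = slack A b xs j - (A *m (x - xs)) j 0.
    rewrite /slack mxE; under [X in _ = _ - X]eq_bigr do rewrite !mxE mulrBr.
    rewrite sumrB; lra.
  have h1 : lam <= slack A b xs j by apply: lam_slack; rewrite finset.in_setC.
  have h2 := entry_le_norm2 (A *m (x - xs)) j.
  have h3 := spec_bound A (x - xs).
  have h4 : K * norm2 (x - xs) <= Mx * B.
    apply: (le_trans (ler_wpM2l K0 nz)); rewrite mulrA (mulrC K).
    by apply: ler_wpM2r.
  have h5 : (A *m (x - xs)) j 0 <= `|(A *m (x - xs)) j 0| by apply: ler_norm.
  rewrite e; lra.
split; first exact: card_UV.
case=> [i|j] [i'|j'] /= hs ht.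
- by apply: le_lt_trans (xS i hs) (lt_trans hS2 (uU i' _)); rewrite negbK in ht.
- by apply: le_lt_trans (xS i hs) (lt_trans hS2 (uV j' ht)).
- by apply: le_lt_trans (sS j hs) (lt_trans hS2 (uU i' _)); rewrite negbK in ht.
- by apply: le_lt_trans (sS j hs) (lt_trans hS2 (uV j' ht)).
Qed.

End Main.

Local Open Scope classical_set_scope.
Unset Implicit Arguments.

Theorem mainTheorem4 (R : realType) (m n : nat) (A : 'M[R]_(m, n))
    (b : 'cV[R]_m) (c : 'rV[R]_n) (xs : 'cV[R]_n) (ys : 'rV[R]_m) :
  primal_optimal A b c xs ->
  (forall x, primal_optimal A b c x -> x = xs) ->
  dual_optimal A b c ys ->
  (forall y, dual_optimal A b c y -> y = ys) ->
  (((lambdaLP A b c xs ys) ^+ 2 * gammaLP A xs ys /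
     (2 * Num.max 1 (Num.sqrt n%:R * specnorm A) * (1 + specnorm A)))%:E
   <= deltaLP A b c xs ys)%E.
Proof.
move=> Hxs _ Hys Uys.
set lam := lambdaLP A b c xs ys; set gam := gammaLP A xs ys; set K := specnorm A.
set D := 2 * Num.max 1 (Num.sqrt n%:R * K) * (1 + K).
set d := lam ^+ 2 * gam / D.
suff hd : delta_set A b c xs ys d.
  by apply: ereal_sup_ubound; exists d.
move=> x fx hg.
have K0 : 0 <= K := spec_ge0 A.
have Dpos : 0 < D.
  rewrite /D; apply: mulr_gt0; last lra.
  apply: mulr_gt0 => //.
  have : 1 <= Num.max 1 (Num.sqrt n%:R * K) by rewrite le_max lexx.
  lra.
have g0 : 0 <= cx c xs - cx c x.
  by rewrite subr_ge0; case: Hxs => _; apply.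
have dpos : 0 < d by apply: le_lt_trans g0 hg.
have l0 : 0 <= lam := lam_ge0 Hxs Hys.
have lpos : 0 < lam.
  rewrite lt_def l0 andbT; apply/negP => /eqP l00.
  by move: dpos; rewrite /d l00 expr0n mul0r mul0r ltxx.
have gpos : 0 < gam.
  rewrite ltNge; apply/negP => hg0.
  move: dpos; rewrite /d ltNge => /negP; apply.
  rewrite pmulr_lle0 ?invr_gt0 //.
  by apply: mulr_ge0_le0 => //; apply: sqr_ge0.
exact: (sep Hxs Hys Uys lpos gpos fx hg).
Qed.
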